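(* Let $q_1,q_2$ be inference programs such that for every input $c$ the evaluation of $q_1(c)$ is strictly properly weighted for $\gamma_1(\cdot\,;c)$ and the evaluation of $q_2(c)$ is strictly properly weighted for $\gamma_2(\cdot\,;c)$. Then for every input $c_0$, evaluation of $q_3=\mathtt{compose}(q_2,q_1)$ on $c_0$ is strictly properly weighted for its unnormalized density $\gamma_3(\tau_2\oplus\tau_1;c_0)=\gamma_2(\tau_2;c_1)\,\gamma_1(\tau_1;c_0)$, where $c_1$ is the return value of $q_1$ associated with $\tau_1$.
   Context: Traces $\tau$ are finite maps from addresses to values of sampled variables; density maps $\rho$ are finite maps from addresses to $[0,\infty)$; $\oplus$ is union of maps with disjoint domains. Evaluation $c,\tau,\rho,w\leftsquigarrow q(c')$ randomly returns a value, a trace, a density map and a weight. The program $\mathtt{compose}(q_2,q_1)(c_0)$ evaluates $c_1,\tau_1,\rho_1,w_1\leftsquigarrow q_1(c_0)$, then $c_2,\tau_2,\rho_2,w_2\leftsquigarrow q_2(c_1)$, requires $\mathrm{dom}(\rho_1)\cap\mathrm{dom}(\rho_2)=\emptyset$, and returns $c_2,\tau_2\oplus\tau_1,\rho_2\oplus\rho_1,w_2w_1$. An evaluation is strictly properly weighted for an unnormalized density $\gamma$ (w.r.t. a reference measure $d\tau$) if $\mathbb{E}[w\,h(\tau)]=\int d\tau\,\gamma(\tau)h(\tau)$ for all measurable $h$. *)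

(* Defs.v *)
From HB Require Import structures.
From mathcomp Require Import all_boot all_order all_algebra.
From mathcomp Require Import all_classical all_reals all_analysis measurable_realfun.
Set Implicit Arguments. Unset Strict Implicit. Unset Printing Implicit Defensive.
Import Order.TTheory GRing.Theory Num.Theory.
Local Open Scope classical_set_scope.
Local Open Scope ring_scope.
Local Open Scope ereal_scope.

(* An evaluation  c, tau, rho, w <~ q(c')  returns an element of
   Out C Tr Rho R := C * (Tr * (Rho * R))  (value, trace, density map, weight). *)
Definition Out (C Tr Rho R : Type) := (C * (Tr * (Rho * R)))%type.

Section accessors.
Context {C Tr Rho R : Type}.
Definition out_val (x : Out C Tr Rho R) : C := x.1.
Definition out_tr (x : Out C Tr Rho R) : Tr := x.2.1.
Definition out_rho (x : Out C Tr Rho R) : Rho := x.2.2.1.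
Definition out_w (x : Out C Tr Rho R) : R := x.2.2.2.
End accessors.

(* Generic "strictly properly weighted": the evaluation, described by its
   expectation functional E (E f = expectation of f(output)), satisfies
   E[w h(tau)] = I h  for every measurable h >= 0, where
   I h = \int d tau gamma(tau) h(tau)  is integration against the
   unnormalized density gamma w.r.t. the reference measure. *)
Definition spw_gen {R : realType} {dT} {Tr : measurableType dT} {O : Type}
  (E : (O -> \bar R) -> \bar R) (tr : O -> Tr) (w : O -> R)
  (Igamma : (Tr -> \bar R) -> \bar R) : Prop :=
  forall h : Tr -> \bar R, measurable_fun setT h -> (forall t, 0 <= h t) ->
    E (fun x => (w x)%:E * h (tr x)) = Igamma h.

Definition eval_expect {R : realType} {dC dO} {C : measurableType dC}
  {O : measurableType dO} (q : R.-pker C ~> O) (c : C) (f : O -> \bar R) : \bar R :=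
  \int[q c]_x f x.

Definition strictly_properly_weighted {R : realType} {dC dT dRho}
  {C : measurableType dC} {Tr : measurableType dT} {Rho : measurableType dRho}
  (q : R.-pker C ~> Out C Tr Rho R) (c : C)
  (ref : {measure set Tr -> \bar R}) (gamma : Tr -> R) : Prop :=
  spw_gen (eval_expect q c) out_tr out_w (fun h => \int[ref]_t ((gamma t)%:E * h t)).

Definition compose_out {C Tr Rho : Type} {R : realType}
  (mergeT : Tr -> Tr -> Tr) (mergeRho : Rho -> Rho -> Rho)
  (x2 x1 : Out C Tr Rho R) : Out C Tr Rho R :=
  (out_val x2, (mergeT (out_tr x2) (out_tr x1),
                (mergeRho (out_rho x2) (out_rho x1), out_w x2 * out_w x1)%R)).

Definition compose_expect {R : realType} {dC dT dRho}
  {C : measurableType dC} {Tr : measurableType dT} {Rho : measurableType dRho}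
  (mergeT : Tr -> Tr -> Tr) (mergeRho : Rho -> Rho -> Rho)
  (q2 q1 : R.-pker C ~> Out C Tr Rho R) (c0 : C)
  (f : Out C Tr Rho R -> \bar R) : \bar R :=
  \int[q1 c0]_x1 \int[q2 (out_val x1)]_x2 f (compose_out mergeT mergeRho x2 x1).

(* Integration against gamma3(tau2 (+) tau1; c0) = gamma2(tau2; c1) gamma1(tau1; c0)
   (c1 = ret1 c0 tau1) w.r.t. the composite reference measure d tau1 d tau2. *)
Definition composite_density_integral {R : realType} {dC dT}
  {C : measurableType dC} {Tr : measurableType dT}
  (mergeT : Tr -> Tr -> Tr) (ref : {measure set Tr -> \bar R})
  (gamma1 gamma2 : Tr -> C -> R) (ret1 : C -> Tr -> C) (c0 : C)
  (h : Tr -> \bar R) : \bar R :=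
  \int[ref]_t1 \int[ref]_t2
     ((gamma2 t2 (ret1 c0 t1) * gamma1 t1 c0)%R%:E * h (mergeT t2 t1)).

(* Main.v *)
Require Import Defs.
From HB Require Import structures.
From mathcomp Require Import all_boot all_order all_algebra.
From mathcomp Require Import all_classical all_reals all_analysis measurable_realfun.
Import Order.TTheory GRing.Theory Num.Theory.
Local Open Scope classical_set_scope.
Local Open Scope ring_scope.
Local Open Scope ereal_scope.
Section SF.
Context d1 d2 (T1 : measurableType d1) (T2 : measurableType d2) (R : realType).
Variable (m : {measure set T2 -> \bar R}) (hm : sigma_finite setT m).
Let msf := (m : set T2 -> \bar R).
HB.instance Definition _ := Measure.on msf.
HB.instance Definition _ := @Measure_isSigmaFinite.Build _ _ _ msf hm.

Lemma meas_param_int (F : T1 * T2 -> \bar R) :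
  measurable_fun setT F -> (forall z, 0 <= F z) ->
  measurable_fun setT (fun x => \int[m]_y F (x, y)).
Proof.
move=> mF F0.
exact: (@measurable_fun_fubini_tonelli_F _ _ T1 T2 R msf F mF F0).
Qed.
End SF.
Section KF.
Context dX dC dO (X : measurableType dX) (C : measurableType dC) (O : measurableType dO) (R : realType).
Variable (q : R.-pker C ~> O) (f : X -> C) (mf : measurable_fun setT f).
Let kf := fun x => q (f x).
Let mkf U : measurable U -> measurable_fun [set: X] (kf ^~ U).
Proof. move=> mU; exact: (measurableT_comp (measurable_kernel q U mU) mf). Qed.
HB.instance Definition _ := isKernel.Build _ _ _ _ _ kf mkf.
Let pkf x : kf x [set: O] = 1. Proof. exact: prob_kernel. Qed.
HB.instance Definition _ := Kernel_isProbability.Build _ _ _ _ _ kf pkf.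

Lemma meas_kint (F : X * O -> \bar R) :
  measurable_fun setT F ->
  measurable_fun setT (fun x => \int[q (f x)]_y F (x, y)).
Proof.
move=> mF.
have mP : measurable_fun setT (fun x => \int[kf x]_y F^\+ (x, y)).
  apply: (measurable_fun_integral_finite_kernel (F^\+) kf) => //.
  exact: measurable_funepos.
have mN : measurable_fun setT (fun x => \int[kf x]_y F^\- (x, y)).
  apply: (measurable_fun_integral_finite_kernel (F^\-) kf) => //.
  exact: measurable_funeneg.
have H1 := emeasurable_funB mP mN.
move: H1; apply: eq_measurable_fun => x _.
rewrite [RHS]integralE; congr (_ - _); apply: eq_integral => y _.
  by rewrite !funeposE.
by rewrite !funenegE.
Qed.
End KF.

Section AEZ.
Context d (T : measurableType d) (R : realType).
Lemma ae_integralZl (mu : {measure set T -> \bar R}) (f : T -> \bar R) (k : R) :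
  (0 <= k)%R -> measurable_fun setT f -> {ae mu, forall x, 0 <= f x} ->
  \int[mu]_x (k%:E * f x) = k%:E * \int[mu]_x f x.
Proof.
move=> k0 mf f0.
have aeq : ae_eq mu setT f (f^\+).
  apply: filterS f0 => x fx0 _; rewrite funeposE; apply/esym/max_idPl => //.
have mfp : measurable_fun setT (f^\+) by exact: measurable_funepos.
have m1 : measurable_fun setT (fun x => k%:E * f x).
  by apply: emeasurable_funM => //; exact: measurable_cst.
have m2 : measurable_fun setT (fun x => k%:E * f^\+ x).
  by apply: emeasurable_funM => //; exact: measurable_cst.
have aeq2 : ae_eq mu setT (fun x => k%:E * f x) (fun x => k%:E * f^\+ x).
  by apply: filterS aeq => x /(_ I) fx _; rewrite fx.
rewrite (ae_eq_integral _ _ measurableT m1 m2 aeq2).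
have fp0 : forall x, setT x -> 0 <= f^\+ x by move=> x _; exact: funepos_ge0.
rewrite ge0_integralZl //.
by congr (_ * _); exact/esym/(ae_eq_integral _ _ measurableT mf mfp aeq).
Qed.
End AEZ.
Theorem mainTheorem6 (R : realType) (dC dT dRho : measure_display)
  (C : measurableType dC) (Tr : measurableType dT) (Rho : measurableType dRho)
  (mergeT : Tr -> Tr -> Tr) (mergeRho : Rho -> Rho -> Rho)
  (disjRho : Rho -> Rho -> Prop)
  (ref : {measure set Tr -> \bar R})
  (q1 q2 : R.-pker C ~> Out C Tr Rho R)
  (gamma1 gamma2 : Tr -> C -> R)
  (ret1 : C -> Tr -> C) :
  (* regularity of the setting *)
  sigma_finite setT ref ->
  measurable_fun setT (fun p : Tr * Tr => mergeT p.1 p.2) ->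
  measurable_fun setT (fun p : Tr * C => gamma1 p.1 p.2) ->
  measurable_fun setT (fun p : Tr * C => gamma2 p.1 p.2) ->
  (forall t c, (0 <= gamma1 t c)%R) -> (forall t c, (0 <= gamma2 t c)%R) ->
  (forall c, measurable_fun setT (ret1 c)) ->
  (* weights are nonnegative *)
  (forall c, {ae q1 c, forall x, (0 <= out_w x)%R}) ->
  (forall c, {ae q2 c, forall x, (0 <= out_w x)%R}) ->
  (* the return value of q1 is the one associated with its trace *)
  (forall c, {ae q1 c, forall x, out_val x = ret1 c (out_tr x)}) ->
  (* compose requires dom(rho1) and dom(rho2) disjoint *)
  (forall c0, {ae q1 c0, forall x1, {ae q2 (out_val x1), forall x2,
      disjRho (out_rho x2) (out_rho x1)}}) ->
  (* hypotheses of the theorem *)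
  (forall c, strictly_properly_weighted q1 c ref (gamma1 ^~ c)) ->
  (forall c, strictly_properly_weighted q2 c ref (gamma2 ^~ c)) ->
  forall c0 : C,
    spw_gen (compose_expect mergeT mergeRho q2 q1 c0) out_tr out_w
      (composite_density_integral mergeT ref gamma1 gamma2 ret1 c0).
Proof.
move=> sref mmerge mg1 mg2 g10 g20 mret w1ae w2ae retae disj spw1 spw2 c0 h mh h0.
have mw : measurable_fun setT (@out_w C Tr Rho R).
  rewrite /out_w; apply: measurableT_comp; first exact: measurable_snd.
  apply: measurableT_comp; first exact: measurable_snd.
  exact: measurable_snd.
have mtr : measurable_fun setT (@out_tr C Tr Rho R).
  rewrite /out_tr; apply: measurableT_comp; first exact: measurable_fst.
  exact: measurable_snd.
have mval : measurable_fun setT (@out_val C Tr Rho R) by exact: measurable_fst.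
have mhm : forall a, measurable_fun setT (fun t => h (mergeT t a)).
  move=> a; apply: measurableT_comp => //.
  exact: (measurableT_comp mmerge (pair2_measurable a)).
pose I2 c t1 := \int[ref]_t2 ((gamma2 t2 c)%:E * h (mergeT t2 t1)).
pose H t1 := I2 (ret1 c0 t1) t1.
have stepA : forall x1 : Out C Tr Rho R, (0 <= out_w x1)%R ->
  \int[q2 (out_val x1)]_x2 ((out_w x2 * out_w x1)%:E * h (mergeT (out_tr x2) (out_tr x1)))
  = (out_w x1)%:E * I2 (out_val x1) (out_tr x1).
  move=> x1 w10.
  rewrite (eq_integral (fun x2 : Out C Tr Rho R => (out_w x1)%:E * ((out_w x2)%:E * h (mergeT (out_tr x2) (out_tr x1))))); last first.
    by move=> x2 _; rewrite EFinM (muleC (out_w x2)%:E) muleA.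
  rewrite ae_integralZl //.
  - congr (_ * _); exact: (spw2 (out_val x1) _ (mhm (out_tr x1)) (fun t => h0 _)).
  - apply: emeasurable_funM; first exact/measurable_EFinP.
    exact: (measurableT_comp (mhm (out_tr x1)) mtr).
  - apply: filterS (w2ae (out_val x1)) => x2 w20.
    by apply: mule_ge0 => //; rewrite lee_fin.
have mF : measurable_fun setT
    (fun p : Tr * Tr => (gamma2 p.2 (ret1 c0 p.1))%:E * h (mergeT p.2 p.1)).
  apply: emeasurable_funM.
    apply/measurable_EFinP.
    exact: (measurableT_comp mg2 (measurable_fun_pair measurable_snd
      (measurableT_comp (mret c0) measurable_fst))).
  exact: (measurableT_comp mh (measurableT_comp mmerge
      (measurable_fun_pair measurable_snd measurable_fst))).
have F0 : forall p : Tr * Tr, 0 <= (gamma2 p.2 (ret1 c0 p.1))%:E * h (mergeT p.2 p.1).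
  by move=> p; apply: mule_ge0 => //; rewrite lee_fin.
have mH : measurable_fun setT H by exact: (@meas_param_int _ _ _ _ _ _ sref _ mF F0).
have H0 : forall t, 0 <= H t.
  by move=> t; apply: integral_ge0 => t2 _; apply: mule_ge0 => //; rewrite lee_fin.
rewrite /compose_expect /composite_density_integral.
have mG : measurable_fun setT (fun p : Out C Tr Rho R * Out C Tr Rho R =>
    (out_w p.2 * out_w p.1)%:E * h (mergeT (out_tr p.2) (out_tr p.1))).
  apply: emeasurable_funM.
    apply/measurable_EFinP.
    apply: measurable_funM.
      exact: (measurableT_comp mw measurable_snd).
    exact: (measurableT_comp mw measurable_fst).
  exact: (measurableT_comp mh (measurableT_comp mmerge
      (measurable_fun_pair (measurableT_comp mtr measurable_snd)
         (measurableT_comp mtr measurable_fst)))).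
have mLHS := @meas_kint _ _ _ _ _ _ _ q2 _ mval _ mG.
have mRHS : measurable_fun setT (fun x1 : Out C Tr Rho R => (out_w x1)%:E * H (out_tr x1)).
  apply: emeasurable_funM; first exact/measurable_EFinP.
  exact: (measurableT_comp mH mtr).
have aeq : ae_eq (q1 c0) setT
  (fun x1 => \int[q2 (out_val x1)]_x2 ((out_w x2 * out_w x1)%:E * h (mergeT (out_tr x2) (out_tr x1))))
  (fun x1 : Out C Tr Rho R => (out_w x1)%:E * H (out_tr x1)).
  apply: filterS2 (w1ae c0) (retae c0) => x1 w10 ret _.
  by rewrite stepA // /H ret.
transitivity (\int[q1 c0]_x1 ((out_w x1)%:E * H (out_tr x1))).
  exact: (ae_eq_integral _ _ measurableT mLHS mRHS aeq).
transitivity (\int[ref]_t1 ((gamma1 t1 c0)%:E * H t1)).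
  exact: (spw1 c0 H mH H0).
apply: eq_integral => t1 _.
rewrite /H /I2 -ge0_integralZl //; try (by rewrite lee_fin g10);
  try (by move=> t2 _; apply: mule_ge0 => //; rewrite lee_fin g20);
  try exact: (measurableT_comp mF (pair1_measurable t1)).
apply: eq_integral => t2 _.
by rewrite EFinM -muleA muleCA.
Qed.
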